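(* $\mathrm{SPARQL}_{\operatorname{DIFF}}$ contains $\mathrm{SPARQL}_{\operatorname{EXS}}$. That is, every operator of $\mathrm{SPARQL}_{\operatorname{EXS}}$ ($\operatorname{AND}$, $\operatorname{UNION}$, $\operatorname{OPT}$, $\operatorname{FILTER}$, $\operatorname{MINUS}$, and $\operatorname{NOT\text{-}EXISTS}$ as restricted in $\mathrm{SPARQL}_{\operatorname{EXS}}$) is expressible using only $\operatorname{AND}$, $\operatorname{UNION}$, $\operatorname{DIFF}$ and $\operatorname{FILTER}$.
   Context: RDF. Fix pairwise disjoint infinite sets $I$ (IRIs), $L$ (literals) and $V$ (variables). An RDF graph is a set of triples in $I\times I\times(I\cup L)$. Mappings and multisets. A mapping is a partial function $\mu:V\to I\cup L$. Mappings $\mu_1,\mu_2$ are compatible ($\mu_1\sim\mu_2$) if they agree on their common domain; then $\mu_1\cup\mu_2$ is a mapping. Evaluations return multisets of mappings. Filter constraints. The atomic ones are $?X=c$, $?X=?Y$ and $\operatorname{bound}(?X)$; they are closed under $!$, $\|$ and $\&\&$. A constraint $C$ corresponds to the selection formula $f(C)$, evaluated in the three-valued logic $\{\mathit{true},\mathit{false},\mathit{error}\}$: - an equality with an unbound variable gives $\mathit{error}$; - $\land$, $\lor$ and $\neg$ follow Kleene's strong logic with $\mathit{error}$ as unknown. Algebra operations on multisets. - Join $\Join$: the unions of compatible pairs, with multiplicities being sums of products. - Union $\cup$: multiplicities added. - Selection $\sigma_F$: keeps the mappings on which $F$ is $\mathit{true}$. - Difference $\Omega_1\setminus_F\Omega_2=\{\mu_1\in\Omega_1\mid\forall\mu_2\in\Omega_2,\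 \mu_1\nsim\mu_2\lor(\mu_1\sim\mu_2\land(\mu_1\cup\mu_2)(F)=\mathit{false})\}$. - Left-join $\Omega_1\,⟕_F\,\Omega_2=\sigma_F(\Omega_1\Join\Omega_2)\cup(\Omega_1\setminus_F\Omega_2)$. Graph patterns. The patterns are built recursively from triple patterns in $(I\cup L\cup V)\times(I\cup V)\times(I\cup L\cup V)$, using $\operatorname{AND}$, $\operatorname{UNION}$, $\operatorname{OPT}$, $\operatorname{MINUS}$, $\operatorname{NOT\text{-}EXISTS}$, $\operatorname{DIFF}$ and $\operatorname{FILTER}$. Semantics over $G$. - $[\![t]\!]_G$ is the set of mappings $\mu$ with $\operatorname{dom}(\mu)=\operatorname{var}(t)$ and $\mu(t)\in G$, each with multiplicity 1. - $\operatorname{AND}$ is $\Join$, and $\operatorname{UNION}$ is $\cup$. - $[\![P\operatorname{FILTER}C]\!]=\sigma_{f(C)}([\![P]\!])$. - $[\![P_1\operatorname{OPT}P_2]\!]$ is $[\![P_1]\!]\,⟕_{f(C)}\,[\![P_3]\!]$ if $P_2=(P_3\operatorname{FILTER}C)$, and $[\![P_1]\!]\,⟕_{\mathit{true}}\,[\![P_2]\!]$ otherwise. - $[\![P_1\operatorname{MINUS}P_2]\!]=\{\mu_1\in[\![P_1]\!]\mid\forall\mu_2\in[\![P_2]\!],\ \mu_1\nsim\mu_2\lor\operatorname{dom}(\mu_1)\cap\operatorname{dom}(\mu_2)=\emptyset\}$. - $[\![P_1\operatorname{DIFF}P_2]\!]=\{\mu_1\in[\![P_1]\!]\mid\forall\mu_2\in[\![P_2]\!],\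 \mu_1\nsim\mu_2\}$. - $[\![P_1\operatorname{NOT\text{-}EXISTS}P_2]\!]=\{\mu\in[\![P_1]\!]\mid[\![\mu(P_2)]\!]=\emptyset\}$, where $\mu(P_2)$ substitutes variables by their $\mu$-values. In $\operatorname{MINUS}$, $\operatorname{DIFF}$ and $\operatorname{NOT\text{-}EXISTS}$, multiplicities are taken from $[\![P_1]\!]$. Safe variables. The set $\operatorname{svar}(P)$ is defined recursively: - $\operatorname{svar}(t)=\operatorname{var}(t)$ for a triple pattern $t$; - $\operatorname{svar}$ of an $\operatorname{AND}$ is the union of the $\operatorname{svar}$ of its arguments; - $\operatorname{svar}$ of a $\operatorname{UNION}$ or an $\operatorname{OPT}$ is the intersection of the $\operatorname{svar}$ of its arguments; - $\operatorname{svar}$ of $(P_1\operatorname{FILTER}C)$, $(P_1\operatorname{MINUS}P_2)$, $(P_1\operatorname{NOT\text{-}EXISTS}P_2)$ or $(P_1\operatorname{DIFF}P_2)$ is $\operatorname{svar}(P_1)$. Fragments. $\mathrm{SPARQL}_{\operatorname{EXS}}$ is the fragment of graph patterns in which every subpattern $(P\operatorname{NOT\text{-}EXISTS}P')$ satisfies $\operatorname{var}(P)\cap\operatorname{var}(P')\subseteq\operatorname{svar}(P')$. $\mathrm{SPARQL}_{\operatorname{DIFF}}$ is the language of graph patterns built with $\operatorname{AND}$, $\operatorname{UNION}$, $\operatorname{DIFF}$ and $\operatorname{FILTER}$. Terminology. An operator is expressible in a language $L$ iff some subset of the operators of $L$ can express the same queries. A language $L$ contains $L'$ iff every operator of $L'$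 is expressible in $L$. *)

(* Defs.v *)
From Stdlib Require Import ClassicalEpsilon.
From mathcomp Require Import all_boot.
From mathcomp Require Import finmap.

Set Implicit Arguments.
Unset Strict Implicit.
Unset Printing Implicit Defensive.

Local Open Scope fset_scope.
Local Open Scope fmap_scope.

Definition pb (P : Prop) : bool :=
  if excluded_middle_informative P then true else false.

Definition infinite_type (T : eqType) : Prop :=
  forall s : seq T, exists x : T, x \notin s.

Section SPARQL.
(* I = IRIs, Lt = literals, Vr = variables; pairwise disjoint by construction *)
Variables (I Lt Vr : choiceType).

Definition val := (I + Lt)%type.

Definition triple := (I * I * val)%type.
Definition graph := triple -> Prop.

Definition mapping := {fmap Vr -> val}.

Definition mset := mapping -> nat.

(* terms: a variable or a constant of I ∪ L.  Constants in arbitrary positions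
   are needed to make the substitution mu(P) of NOT-EXISTS total; the
   original grammar is singled out by [wf_pat] below. *)
Inductive term := TVar of Vr | TConst of val.

Inductive constr :=
| CEq of term & term
| CBound of term
| CNot of constr
| COr of constr & constr
| CAnd of constr & constr.

Definition tpattern := (term * term * term)%type.

Inductive pattern :=
| PT of tpattern
| PAnd of pattern & pattern
| PUnion of pattern & pattern
| POpt of pattern & pattern
| PMinus of pattern & pattern
| PNotExists of pattern & pattern
| PDiff of pattern & pattern
| PFilter of pattern & constr.

Definition is_var (t : term) := if t is TVar _ then true else false.
Definition is_iri_or_var (t : term) :=
  match t with TVar _ => true | TConst (inl _) => true | TConst (inr _) => false end.

Fixpoint wf_constr (C : constr) : bool :=
  match C with
  | CEq t1 t2 => is_var t1
  | CBound t => is_var t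
  | CNot C1 => wf_constr C1
  | COr C1 C2 | CAnd C1 C2 => wf_constr C1 && wf_constr C2
  end.

Fixpoint wf_pat (P : pattern) : bool :=
  match P with
  | PT (s, p, o) => is_iri_or_var p
  | PAnd P1 P2 | PUnion P1 P2 | POpt P1 P2 | PMinus P1 P2
  | PNotExists P1 P2 | PDiff P1 P2 => wf_pat P1 && wf_pat P2
  | PFilter P1 C => wf_pat P1 && wf_constr C
  end.

Definition tvars (t : term) : {fset Vr} :=
  if t is TVar x then [fset x] else fset0.

Definition tpvars (t : tpattern) : {fset Vr} :=
  let: (s, p, o) := t in tvars s `|` tvars p `|` tvars o.

Fixpoint cvars (C : constr) : {fset Vr} :=
  match C with
  | CEq t1 t2 => tvars t1 `|` tvars t2
  | CBound t => tvars t
  | CNot C1 => cvars C1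
  | COr C1 C2 | CAnd C1 C2 => cvars C1 `|` cvars C2
  end.

Fixpoint pvars (P : pattern) : {fset Vr} :=
  match P with
  | PT t => tpvars t
  | PAnd P1 P2 | PUnion P1 P2 | POpt P1 P2 | PMinus P1 P2
  | PNotExists P1 P2 | PDiff P1 P2 => pvars P1 `|` pvars P2
  | PFilter P1 C => pvars P1 `|` cvars C
  end.

Fixpoint svar (P : pattern) : {fset Vr} :=
  match P with
  | PT t => tpvars t
  | PAnd P1 P2 => svar P1 `|` svar P2
  | PUnion P1 P2 | POpt P1 P2 => svar P1 `&` svar P2
  | PFilter P1 _ | PMinus P1 _ | PNotExists P1 _ | PDiff P1 _ => svar P1
  end.

Fixpoint in_EXS (P : pattern) : bool :=
  match P with
  | PT _ => true
  | PNotExists P1 P2 =>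
      [&& (pvars P1 `&` pvars P2) `<=` svar P2, in_EXS P1 & in_EXS P2]
  | PAnd P1 P2 | PUnion P1 P2 | POpt P1 P2 | PMinus P1 P2 | PDiff P1 P2 =>
      in_EXS P1 && in_EXS P2
  | PFilter P1 _ => in_EXS P1
  end.

Fixpoint in_DIFF (P : pattern) : bool :=
  match P with
  | PT _ => true
  | PAnd P1 P2 | PUnion P1 P2 | PDiff P1 P2 => in_DIFF P1 && in_DIFF P2
  | PFilter P1 _ => in_DIFF P1
  | POpt _ _ | PMinus _ _ | PNotExists _ _ => false
  end.

Inductive tv := TTrue | TFalse | TErr.

Definition tv_not (a : tv) : tv :=
  match a with TTrue => TFalse | TFalse => TTrue | TErr => TErr end.
Definition tv_and (a b : tv) : tv :=
  match a, b with
  | TFalse, _ | _, TFalse => TFalse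
  | TTrue, TTrue => TTrue
  | _, _ => TErr
  end.
Definition tv_or (a b : tv) : tv :=
  match a, b with
  | TTrue, _ | _, TTrue => TTrue
  | TFalse, TFalse => TFalse
  | _, _ => TErr
  end.

Definition tval (mu : mapping) (t : term) : option val :=
  match t with TVar x => mu.[? x] | TConst c => Some c end.

Fixpoint feval (C : constr) (mu : mapping) : tv :=
  match C with
  | CEq t1 t2 =>
      match tval mu t1, tval mu t2 with
      | Some a, Some b => if a == b then TTrue else TFalse
      | _, _ => TErr
      end
  | CBound t => if tval mu t is Some _ then TTrue else TFalse
  | CNot C1 => tv_not (feval C1 mu)
  | COr C1 C2 => tv_or (feval C1 mu) (feval C2 mu)
  | CAnd C1 C2 => tv_and (feval C1 mu) (feval C2 mu)
  end.

Definition compatible (mu1 mu2 : mapping) : Prop :=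
  forall x, x \in domf mu1 -> x \in domf mu2 -> mu1.[? x] = mu2.[? x].

(* mu1 ∪ mu2 (meaningful for compatible mappings) *)
Definition munion (mu1 mu2 : mapping) : mapping := mu1 + mu2.

(* Join: multiplicity of mu is the sum, over the pairs (mu1, mu2) of
   compatible mappings with mu1 ∪ mu2 = mu, of m1(mu1) * m2(mu2).
   Such pairs are exactly the restrictions of mu to pairs of subsets
   (A, B) of dom(mu) with A ∪ B = dom(mu). *)
Definition mjoin (O1 O2 : mset) : mset := fun mu =>
  \sum_(A <- fpowerset (domf mu))
    \sum_(B <- fpowerset (domf mu) | A `|` B == domf mu)
      O1 (restrictf mu A) * O2 (restrictf mu B).

Definition munion_ms (O1 O2 : mset) : mset := fun mu => (O1 mu + O2 mu)%N.

Definition mselect (F : mapping -> tv) (O : mset) : mset := fun mu =>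
  if F mu is TTrue then O mu else 0.

Definition mdiffF (F : mapping -> tv) (O1 O2 : mset) : mset := fun mu1 =>
  if pb (forall mu2, 0 < O2 mu2 ->
           ~ compatible mu1 mu2 \/
           (compatible mu1 mu2 /\ F (munion mu1 mu2) = TFalse))
  then O1 mu1 else 0.

Definition mleftjoin (F : mapping -> tv) (O1 O2 : mset) : mset :=
  munion_ms (mselect F (mjoin O1 O2)) (mdiffF F O1 O2).

Definition ftrue : mapping -> tv := fun _ => TTrue.

Definition tsubst (mu : mapping) (t : term) : term :=
  match t with
  | TVar x => if mu.[? x] is Some v then TConst v else TVar x
  | TConst c => TConst c
  end.

Fixpoint csubst (mu : mapping) (C : constr) : constr :=
  match C with
  | CEq t1 t2 => CEq (tsubst mu t1) (tsubst mu t2)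
  | CBound t => CBound (tsubst mu t)
  | CNot C1 => CNot (csubst mu C1)
  | COr C1 C2 => COr (csubst mu C1) (csubst mu C2)
  | CAnd C1 C2 => CAnd (csubst mu C1) (csubst mu C2)
  end.

Fixpoint psubst (mu : mapping) (P : pattern) : pattern :=
  match P with
  | PT (s, p, o) => PT (tsubst mu s, tsubst mu p, tsubst mu o)
  | PAnd P1 P2 => PAnd (psubst mu P1) (psubst mu P2)
  | PUnion P1 P2 => PUnion (psubst mu P1) (psubst mu P2)
  | POpt P1 P2 => POpt (psubst mu P1) (psubst mu P2)
  | PMinus P1 P2 => PMinus (psubst mu P1) (psubst mu P2)
  | PNotExists P1 P2 => PNotExists (psubst mu P1) (psubst mu P2)
  | PDiff P1 P2 => PDiff (psubst mu P1) (psubst mu P2)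
  | PFilter P1 C => PFilter (psubst mu P1) (csubst mu C)
  end.

Definition tinst (mu : mapping) (t : tpattern) : option triple :=
  let: (s, p, o) := t in
  match tval mu s, tval mu p, tval mu o with
  | Some (inl a), Some (inl b), Some c => Some (a, b, c)
  | _, _, _ => None
  end.

Fixpoint psize (P : pattern) : nat :=
  match P with
  | PT _ => 1
  | PAnd P1 P2 | PUnion P1 P2 | POpt P1 P2 | PMinus P1 P2
  | PNotExists P1 P2 | PDiff P1 P2 => (psize P1 + psize P2).+1
  | PFilter P1 _ => (psize P1).+1
  end.

(* evaluation with fuel (the fuel psize P is always sufficient, since
   substitution preserves psize) *)
Fixpoint evalF (G : graph) (n : nat) (P : pattern) {struct n} : mset :=
  match n with
  | 0 => fun _ => 0
  | n'.+1 =>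
    match P with
    | PT t => fun mu =>
        if pb (domf mu = tpvars t /\ exists tr, tinst mu t = Some tr /\ G tr)
        then 1 else 0
    | PAnd P1 P2 => mjoin (evalF G n' P1) (evalF G n' P2)
    | PUnion P1 P2 => munion_ms (evalF G n' P1) (evalF G n' P2)
    | POpt P1 P2 =>
        match P2 with
        | PFilter P3 C => mleftjoin (feval C) (evalF G n' P1) (evalF G n' P3)
        | _ => mleftjoin ftrue (evalF G n' P1) (evalF G n' P2)
        end
    | PFilter P1 C => mselect (feval C) (evalF G n' P1)
    | PMinus P1 P2 => fun mu1 =>
        if pb (forall mu2, 0 < evalF G n' P2 mu2 ->
                 ~ compatible mu1 mu2 \/ domf mu1 `&` domf mu2 = fset0)
        then evalF G n' P1 mu1 else 0
    | PDiff P1 P2 => fun mu1 =>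
        if pb (forall mu2, 0 < evalF G n' P2 mu2 -> ~ compatible mu1 mu2)
        then evalF G n' P1 mu1 else 0
    | PNotExists P1 P2 => fun mu =>
        if pb (forall mu2, evalF G n' (psubst mu P2) mu2 = 0)
        then evalF G n' P1 mu else 0
    end
  end.

Definition eval (G : graph) (P : pattern) : mset := evalF G (psize P) P.

End SPARQL.

(* Main.v *)
Require Import Defs.
From Stdlib Require Import FunctionalExtensionality PropExtensionality ClassicalEpsilon.
From mathcomp Require Import all_boot finmap zify.
Set Implicit Arguments. Unset Strict Implicit. Unset Printing Implicit Defensive.
Local Open Scope fset_scope.
Local Open Scope fmap_scope.

Section S.
Variables (I Lt Vr : choiceType) (G : graph I Lt).
Notation pattern := (pattern I Lt Vr).
Notation mapping := (mapping I Lt Vr).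
Notation mset := (mset I Lt Vr).
Notation eval := (eval G).

Lemma pbP (P : Prop) : reflect P (pb P).
Proof. rewrite /pb; case: excluded_middle_informative => h; by constructor. Qed.

Lemma psize_psubst (mu : mapping) (P : pattern) : psize (psubst mu P) = psize P.
Proof. by elim: P => [[[s p] o]|P1 IH1 P2 IH2|P1 IH1 P2 IH2|P1 IH1 P2 IH2|P1 IH1 P2 IH2|P1 IH1 P2 IH2|P1 IH1 P2 IH2|P1 IH1 C] //=; rewrite ?IH1 ?IH2. Qed.

Lemma evalF_st n m (P : pattern) : psize P <= n -> psize P <= m -> evalF G n P = evalF G m P.
Proof.
elim: n m P => [|n IH] [|m] P //=; try by case: P.
case: P => [t|P1 P2|P1 P2|P1 P2|P1 P2|P1 P2|P1 P2|P1 C] /=; rewrite ?ltnS => hn hm //.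
- by rewrite (IH m P1) ?(IH m P2) //; lia.
- by rewrite (IH m P1) ?(IH m P2) //; lia.
- case: P2 hn hm => [t|Q1 Q2|Q1 Q2|Q1 Q2|Q1 Q2|Q1 Q2|Q1 Q2|Q1 C] /= hn hm;
   by rewrite (IH m P1) ?(IH m Q1) ?(IH m (PT t)) ?(IH m (PAnd Q1 Q2)) ?(IH m (PUnion Q1 Q2)) ?(IH m (POpt Q1 Q2)) ?(IH m (PMinus Q1 Q2)) ?(IH m (PNotExists Q1 Q2)) ?(IH m (PDiff Q1 Q2)) //=; lia.
- by rewrite (IH m P1) ?(IH m P2) //; lia.
- apply: functional_extensionality => mu.
  have E : forall mu2, evalF G n (psubst mu P2) mu2 = evalF G m (psubst mu P2) mu2.
    by move=> mu2; rewrite (IH m) // psize_psubst; lia.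
  have -> : (forall mu2, evalF G n (psubst mu P2) mu2 = 0) = (forall mu2, evalF G m (psubst mu P2) mu2 = 0).
    by apply: propositional_extensionality; split=> h mu2; rewrite ?E // -E.
  by rewrite (IH m P1) //; lia.
- by rewrite (IH m P1) ?(IH m P2) //; lia.
- by rewrite (IH m P1) //; lia.
Qed.

Lemma evalE n (P : pattern) : psize P <= n -> evalF G n P = eval P.
Proof. by move=> h; rewrite /Defs.eval (@evalF_st _ (psize P)). Qed.

Lemma eval_T (t : tpattern I Lt Vr) : eval (PT t) = fun mu =>
  if pb (domf mu = tpvars t /\ exists tr, tinst mu t = Some tr /\ G tr) then 1 else 0.
Proof. by []. Qed.

Lemma eval_And (P1 P2 : pattern) : eval (PAnd P1 P2) = mjoin (eval P1) (eval P2).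
Proof. by rewrite /Defs.eval /= !evalE //; lia. Qed.
Lemma eval_Union (P1 P2 : pattern) : eval (PUnion P1 P2) = munion_ms (eval P1) (eval P2).
Proof. by rewrite /Defs.eval /= !evalE //; lia. Qed.
Lemma eval_Filter (P1 : pattern) C : eval (PFilter P1 C) = mselect (feval C) (eval P1).
Proof. by rewrite /Defs.eval /= !evalE //; lia. Qed.
Lemma eval_Diff (P1 P2 : pattern) : eval (PDiff P1 P2) = fun mu1 =>
  if pb (forall mu2, 0 < eval P2 mu2 -> ~ compatible mu1 mu2) then eval P1 mu1 else 0.
Proof. by rewrite /Defs.eval /= !evalE //; lia. Qed.
Lemma eval_Minus (P1 P2 : pattern) : eval (PMinus P1 P2) = fun mu1 =>
  if pb (forall mu2, 0 < eval P2 mu2 ->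
           ~ compatible mu1 mu2 \/ domf mu1 `&` domf mu2 = fset0) then eval P1 mu1 else 0.
Proof. by rewrite /Defs.eval /= !evalE //; lia. Qed.
Lemma eval_NEx (P1 P2 : pattern) : eval (PNotExists P1 P2) = fun mu =>
  if pb (forall mu2, eval (psubst mu P2) mu2 = 0) then eval P1 mu else 0.
Proof.
rewrite /Defs.eval /= evalE; last lia.
apply: functional_extensionality => mu.
by rewrite (@evalF_st _ (psize (psubst mu P2))) // psize_psubst; lia.
Qed.
Lemma eval_Opt (P1 P2 : pattern) : eval (POpt P1 P2) =
  match P2 with
  | PFilter P3 C => mleftjoin (feval C) (eval P1) (eval P3)
  | _ => mleftjoin (@ftrue I Lt Vr) (eval P1) (eval P2)
  end.
Proof.
rewrite [LHS]/Defs.eval [LHS]/=; case: P2 => [t|Q1 Q2|Q1 Q2|Q1 Q2|Q1 Q2|Q1 Q2|Q1 Q2|Q1 C];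
 rewrite [LHS]/= !evalE //=; lia.
Qed.

Lemma fnd_dom (m : mapping) x : (x \in domf m) = (m.[? x] != None).
Proof. by rewrite -fndSome; case: (m.[? x]). Qed.

Lemma compat_sym (m1 m2 : mapping) : compatible m1 m2 -> compatible m2 m1.
Proof. by move=> h x a b; rewrite h. Qed.

Lemma compatP (m1 m2 : mapping) :
  compatible m1 m2 <-> forall x v1 v2, m1.[? x] = Some v1 -> m2.[? x] = Some v2 -> v1 = v2.
Proof.
split=> h x.
  move=> v1 v2 e1 e2; have := h x; rewrite !fnd_dom e1 e2 => /(_ isT isT); by case.
rewrite !fnd_dom; case e1: (m1.[? x]) => [v1|] // _; case e2: (m2.[? x]) => [v2|] // _.
by rewrite (h x v1 v2).
Qed.

Lemma fnd_catc (m1 m2 : mapping) x : compatible m1 m2 ->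
  (m1 + m2).[? x] = if m1.[? x] is Some v then Some v else m2.[? x].
Proof.
move=> /compatP h; rewrite fnd_cat fnd_dom.
case e1: (m1.[? x]) => [v1|]; case e2: (m2.[? x]) => [v2|] //=.
by rewrite (h x v1 v2).
Qed.

Lemma compat_catl (m1 m2 : mapping) : compatible m1 m2 -> compatible m1 (m1 + m2).
Proof.
move=> h; apply/compatP => x v1 v2 e1; rewrite fnd_catc // e1; by case.
Qed.
Lemma compat_catr (m1 m2 : mapping) : compatible m1 m2 -> compatible m2 (m1 + m2).
Proof.
move=> h; apply/compatP => x v1 v2 e1; rewrite fnd_cat fnd_dom e1 /=; by case.
Qed.

Lemma mjoin_pos (O1 O2 : mset) (m : mapping) :
  0 < mjoin O1 O2 m <-> exists m1 m2,
    [/\ 0 < O1 m1, 0 < O2 m2, compatible m1 m2 & m = m1 + m2].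
Proof.
rewrite /mjoin lt0n sum_nat_seq_neq0; split.
  case/hasP => A hA /=; rewrite sum_nat_seq_neq0 => /hasP [B hB /andP[/eqP eAB]].
  rewrite muln_eq0 negb_or -!lt0n => /andP[p1 p2].
  exists m.[& A], m.[& B]; split => //.
    by apply/compatP => x v1 v2; rewrite !fnd_restrict; do 2 case: ifP => _ //; move=> -> [].
  apply/fmapP => x; rewrite fnd_cat !fnd_restrict domf_restrict in_fsetI.
  case xB: (x \in B) => /=.
    case: ifP => // h; rewrite not_fnd ?h //; by case: ifP.
  case xA: (x \in A) => //.
  have : x \notin domf m by rewrite -eAB in_fsetU xA xB.
  by rewrite fnd_dom negbK => /eqP ->.
move=> [m1 [m2 [p1 p2 c e]]].
have eAB : domf m1 `|` domf m2 = domf m by rewrite e domf_cat.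
have r1 : m.[& domf m1] = m1.
  apply/fmapP => x; rewrite fnd_restrict e fnd_catc //.
  case: ifP => h; last by rewrite not_fnd ?h.
  by move: h; rewrite fnd_dom; case: (m1.[? x]).
have r2 : m.[& domf m2] = m2.
  apply/fmapP => x; rewrite fnd_restrict e fnd_cat.
  case: ifP => h; rewrite ?h // not_fnd ?h //.
apply/hasP; exists (domf m1); first by rewrite fpowersetE -eAB fsubsetUl.
rewrite /= sum_nat_seq_neq0; apply/hasP; exists (domf m2); first by rewrite fpowersetE -eAB fsubsetUr.
by rewrite eAB eqxx r1 r2 /= muln_eq0 negb_or -!lt0n p1 p2.
Qed.

Lemma munion_pos (O1 O2 : mset) m : 0 < munion_ms O1 O2 m = (0 < O1 m) || (0 < O2 m).
Proof. by rewrite /munion_ms addn_gt0. Qed.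

Lemma mselect_pos F (O : mset) m : 0 < mselect F O m <-> F m = TTrue /\ 0 < O m.
Proof. by rewrite /mselect; case: (F m); split=> // -[]. Qed.

Lemma mdiffF_pos F (O1 O2 : mset) m : 0 < mdiffF F O1 O2 m -> 0 < O1 m.
Proof. by rewrite /mdiffF; case: pbP. Qed.

Lemma mleftjoin_pos F (O1 O2 : mset) m : 0 < mleftjoin F O1 O2 m <->
  (F m = TTrue /\ 0 < mjoin O1 O2 m) \/ 0 < mdiffF F O1 O2 m.
Proof. by rewrite /mleftjoin munion_pos -mselect_pos; split => /orP. Qed.

Lemma size_ind (Pr : pattern -> Prop) :
  (forall P, (forall Q, psize Q < psize P -> Pr Q) -> Pr P) -> forall P, Pr P.
Proof.
move=> h P; have [n] := ubnP (psize P); elim: n P => // n IH P hP.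
by apply: h => Q hQ; apply: IH; apply: leq_trans hQ _.
Qed.

Lemma dom_eval (P : pattern) m : 0 < eval P m -> domf m `<=` pvars P.
Proof.
elim/size_ind: P m => P IH m.
case: P IH => [t|P1 P2|P1 P2|P1 P2|P1 P2|P1 P2|P1 P2|P1 C] IH /=.
- by rewrite eval_T; case: pbP => // -[-> _].
- rewrite eval_And => /mjoin_pos [m1 [m2 [p1 p2 _ ->]]]; rewrite domf_cat.
  by apply: fsetUSS; [apply: (IH P1) | apply: (IH P2)] => //=; lia.
- rewrite eval_Union munion_pos => /orP [] h.
    by apply: fsubset_trans (fsubsetUl _ _); apply: (IH P1) => //=; lia.
  by apply: fsubset_trans (fsubsetUr _ _); apply: (IH P2) => //=; lia.
- have h1 : 0 < eval P1 m -> domf m `<=` pvars P1 `|` pvars P2.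
    by move=> h; apply: fsubset_trans (fsubsetUl _ _); apply: (IH P1) => //=; lia.
  rewrite eval_Opt; case: P2 IH h1 => [t|Q1 Q2|Q1 Q2|Q1 Q2|Q1 Q2|Q1 Q2|Q1 Q2|Q1 C] IH h1;
  move=> /mleftjoin_pos [[_ /mjoin_pos [m1 [m2 [p1 p2 _ ->]]]]| /mdiffF_pos]; try exact: h1;
  rewrite domf_cat; apply: fsetUSS; (try by apply: (IH P1) => //=; lia);
  try (apply: fsubset_trans (fsubsetUl _ _); apply: (IH Q1) => //=; lia);
  by apply: (IH _ _ m2 p2); rewrite /=; lia.
- rewrite eval_Minus; case: pbP => // _ h.
  by apply: fsubset_trans (fsubsetUl _ _); apply: (IH P1) => //=; lia.
- rewrite eval_NEx; case: pbP => // _ h.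
  by apply: fsubset_trans (fsubsetUl _ _); apply: (IH P1) => //=; lia.
- rewrite eval_Diff; case: pbP => // _ h.
  by apply: fsubset_trans (fsubsetUl _ _); apply: (IH P1) => //=; lia.
- rewrite eval_Filter => /mselect_pos [_ h].
  by apply: fsubset_trans (fsubsetUl _ _); apply: (IH P1) => //=; lia.
Qed.

Notation constr := (constr I Lt Vr).
Definition cfalse (v : Vr) : constr := CAnd (CBound (TVar I Lt v)) (CNot (CBound (TVar I Lt v))).
Definition ctrue (v : Vr) : constr := CNot (cfalse v).

Arguments cfalse : simpl never.
Arguments ctrue : simpl never.
Lemma feval_cfalse v m : feval (cfalse v) m = TFalse.
Proof. by rewrite /cfalse /ctrue /=; case: (m.[? v]). Qed.
Lemma feval_ctrue v m : feval (ctrue v) m = TTrue.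
Proof. by rewrite /cfalse /ctrue /=; case: (m.[? v]). Qed.

Fixpoint tfc (v : Vr) (C : constr) : constr * constr :=
  match C with
  | CEq t1 t2 =>
      let b := CAnd (CBound t1) (if t2 is TVar y then CBound (TVar I Lt y) else ctrue v) in
      (CAnd b (CEq t1 t2), CAnd b (CNot (CEq t1 t2)))
  | CBound t => (CBound t, CNot (CBound t))
  | CNot C1 => ((tfc v C1).2, (tfc v C1).1)
  | COr C1 C2 => (COr (tfc v C1).1 (tfc v C2).1, CAnd (tfc v C1).2 (tfc v C2).2)
  | CAnd C1 C2 => (CAnd (tfc v C1).1 (tfc v C2).1, COr (tfc v C1).2 (tfc v C2).2)
  end.

Definition notfalse v C := CNot (tfc v C).2.

Lemma tfc_wf v C : wf_constr C -> wf_constr (tfc v C).1 && wf_constr (tfc v C).2.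
Proof.
elim: C => [t1 t2|t|C1 IH|C1 IH1 C2 IH2|C1 IH1 C2 IH2] /=.
- by case: t1 => // x _; case: t2.
- by case: t.
- by move/IH => /andP[-> ->].
- by move=> /andP[/IH1 /andP[-> ->] /IH2 /andP[-> ->]].
- by move=> /andP[/IH1 /andP[-> ->] /IH2 /andP[-> ->]].
Qed.

Lemma tfc_sem v C m : wf_constr C ->
  feval (tfc v C).1 m = (if feval C m is TTrue then TTrue else TFalse) /\
  feval (tfc v C).2 m = (if feval C m is TFalse then TTrue else TFalse).
Proof.
elim: C => [t1 t2|t|C1 IH|C1 IH1 C2 IH2|C1 IH1 C2 IH2] /=.
- case: t1 => // x _ /=; case: t2 => [y|c] /=; case: (m.[? x]) => [a|] /=; try case: (m.[? y]) => [b|] /=; try case: (_ == _); try case: (m.[? v]); by try move=> ?.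
- by case: t => [x|c] _ /=; rewrite ?fnd_dom; try case: (m.[? x]).
- move/IH => [-> ->]; by case: (feval C1 m).
- move=> /andP[/IH1 [-> ->] /IH2 [-> ->]]; by case: (feval C1 m); case: (feval C2 m).
- move=> /andP[/IH1 [-> ->] /IH2 [-> ->]]; by case: (feval C1 m); case: (feval C2 m).
Qed.

Lemma notfalse_sem v C m : wf_constr C ->
  (feval (notfalse v C) m = TTrue <-> feval C m <> TFalse).
Proof.
move=> /(tfc_sem v m) [_]; rewrite /notfalse /= => ->.
by case: (feval C m); split.
Qed.

Lemma notfalse_wf v C : wf_constr C -> wf_constr (notfalse v C).
Proof. by move/(tfc_wf v) => /andP[]. Qed.

Notation term := (term I Lt Vr).
Lemma tval_subst (mu nu : mapping) (t : term) : Defs.tval nu (tsubst mu t) = Defs.tval (nu + mu) t.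
Proof. case: t => [x|c] //=; rewrite fnd_cat fnd_dom; by case: (mu.[? x]). Qed.

Lemma feval_csubst (mu nu : mapping) (C : constr) : feval (csubst mu C) nu = feval C (nu + mu).
Proof. by elim: C => [t1 t2|t|C1 IH|C1 IH1 C2 IH2|C1 IH1 C2 IH2] /=; rewrite ?tval_subst ?IH ?IH1 ?IH2. Qed.

Lemma tsubst_comp (mu nu : mapping) (t : term) : tsubst nu (tsubst mu t) = tsubst (nu + mu) t.
Proof.
case: t => [x|c] //=; rewrite fnd_cat fnd_dom; case: (mu.[? x]) => //= ; by case: (nu.[? x]).
Qed.

Lemma psubst_comp (mu nu : mapping) (P : pattern) : psubst nu (psubst mu P) = psubst (nu + mu) P.
Proof.
elim: P => [[[s p] o]|P1 IH1 P2 IH2|P1 IH1 P2 IH2|P1 IH1 P2 IH2|P1 IH1 P2 IH2|P1 IH1 P2 IH2|P1 IH1 P2 IH2|P1 IH1 C] /=;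
 rewrite ?tsubst_comp ?IH1 ?IH2 //.
congr PFilter; elim: C => [t1 t2|t|C1 IH|C1 J1 C2 J2|C1 J1 C2 J2] /=; by rewrite ?tsubst_comp ?IH ?J1 ?J2.
Qed.

Lemma tvars_subst (mu : mapping) (t : term) x : x \in tvars (tsubst mu t) = (x \in tvars t) && (x \notin domf mu).
Proof.
case: t => [y|c] //=; rewrite fnd_dom; case e: (mu.[? y]) => [v|] /=; rewrite ?in_fset1 ?in_fset0.
  by case: eqP => // ->; rewrite e.
by case: eqP => // ->; rewrite e.
Qed.

Lemma cvars_subst (mu : mapping) (C : constr) x : x \in cvars (csubst mu C) = (x \in cvars C) && (x \notin domf mu).
Proof.
elim: C => [t1 t2|t|C1 IH|C1 IH1 C2 IH2|C1 IH1 C2 IH2] /=; rewrite ?in_fsetU ?tvars_subst ?IH ?IH1 ?IH2 //;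
 by rewrite andb_orl.
Qed.

Lemma pvars_subst (mu : mapping) (P : pattern) x : x \in pvars (psubst mu P) = (x \in pvars P) && (x \notin domf mu).
Proof.
elim: P => [[[s p] o]|P1 IH1 P2 IH2|P1 IH1 P2 IH2|P1 IH1 P2 IH2|P1 IH1 P2 IH2|P1 IH1 P2 IH2|P1 IH1 P2 IH2|P1 IH1 C] /=;
 rewrite !in_fsetU ?tvars_subst ?IH1 ?IH2 ?cvars_subst -?andb_orl //.
Qed.

Lemma tinst_subst (mu nu : mapping) (s p o : term) :
  tinst nu (tsubst mu s, tsubst mu p, tsubst mu o) = tinst (nu + mu) (s, p, o).
Proof. by rewrite /= !tval_subst. Qed.

Fixpoint bndl (v : Vr) (l : seq Vr) (S : {fset Vr}) : constr :=
  if l is x :: l' then CAnd (if x \in S then CBound (TVar I Lt x) else CNot (CBound (TVar I Lt x))) (bndl v l' S) else ctrue v.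
Definition bnd v (V S : {fset Vr}) := bndl v (enum_fset V) S.
Definition piece v V S (Q : pattern) := PFilter Q (bnd v V S).
Definition pempty v : pattern := PFilter (PT (TVar I Lt v, TVar I Lt v, TVar I Lt v)) (cfalse v).
Definition punion (v : Vr) (ps : seq pattern) : pattern := foldr (fun p q => PUnion p q) (pempty v) ps.
Fixpoint anyl v (l : seq Vr) : constr := if l is x :: l' then COr (CBound (TVar I Lt x)) (anyl v l') else cfalse v.
Definition anyb v (S : {fset Vr}) := anyl v (enum_fset S).

Lemma bndl_sem v l S m : feval (bndl v l S) m =
  if all (fun x => (x \in domf m) == (x \in S)) l then TTrue else TFalse.
Proof.
elim: l => [|x l IH]; first exact: feval_ctrue.
rewrite [bndl _ _ _]/= [feval _ _]/=.
rewrite IH; case xS: (x \in S) => /=; rewrite fnd_dom; case: (m.[? x]) => [a|] /=; rewrite ?xS /=; by try case: ifP.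
Qed.

Lemma bnd_sem v V S m : feval (bnd v V S) m = TTrue <-> {in V, forall x, (x \in domf m) = (x \in S)}.
Proof.
rewrite /bnd bndl_sem; case: allP => h; split => // h2.
  by move=> x xV; apply/eqP/h.
by case: h => x xV; apply/eqP/h2.
Qed.

Lemma bnd_eq v V S m : S `<=` V -> domf m `<=` V -> (feval (bnd v V S) m = TTrue <-> domf m = S).
Proof.
move=> /fsubsetP SV /fsubsetP mV; rewrite bnd_sem; split.
  move=> h; apply/fsetP => x; case xV: (x \in V); first by rewrite h.
  by apply/idP/idP => [/mV|/SV]; rewrite xV.
by move=> -> x.
Qed.

Lemma anyl_sem v l m : feval (anyl v l) m = TTrue <-> exists2 x, x \in l & x \in domf m.
Proof.
elim: l => [|x l IH]; first by rewrite [anyl _ _]/= feval_cfalse; split => // -[].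
rewrite [anyl _ _]/= [feval _ _]/=.
case e: (m.[? x]) => [a|] /=.
  split => // _; exists x; [exact: mem_head | by rewrite fnd_dom e].
have -> : (match feval (anyl v l) m with TTrue => TTrue | TFalse => TFalse | TErr => TErr end) = feval (anyl v l) m by case: feval.
rewrite IH; split => [[y yl ym]|[y]]; first by exists y; rewrite // in_cons yl orbT.
rewrite in_cons => /orP[/eqP -> | yl] ym; last by exists y.
by move: ym; rewrite fnd_dom e.
Qed.

Lemma anyb_sem v S m : feval (anyb v S) m = TTrue <-> exists2 x, x \in S & x \in domf m.
Proof. by rewrite /anyb anyl_sem. Qed.

Lemma eval_pempty v m : eval (pempty v) m = 0.
Proof. by rewrite eval_Filter /mselect feval_cfalse. Qed.

Lemma eval_punion v ps m : eval (punion v ps) m = \sum_(p <- ps) eval p m.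
Proof.
elim: ps => [|p ps IH] /=; first by rewrite big_nil eval_pempty.
by rewrite eval_Union /munion_ms IH big_cons.
Qed.

Lemma eval_piece v V S Q m : eval (piece v V S Q) m = mselect (feval (bnd v V S)) (eval Q) m.
Proof. by rewrite eval_Filter. Qed.

Lemma pieces_sum v (V : {fset Vr}) (Q1 : pattern) (R : {fset Vr} -> pattern) :
  (forall m, 0 < eval Q1 m -> domf m `<=` V) -> forall m,
  eval (punion v [seq PDiff (piece v V U Q1) (R U) | U <- fpowerset V]) m =
  if pb (forall m2, 0 < eval (R (domf m)) m2 -> ~ compatible m m2) then eval Q1 m else 0.
Proof.
move=> hV m; rewrite eval_punion big_map.
case: (posnP (eval Q1 m)) => h0.
  rewrite h0 if_same big1_seq // => U _; rewrite eval_Diff eval_piece /mselect h0.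
  by case: pb => //; case: feval.
have mV := hV m h0.
have mP : domf m \in fpowerset V by rewrite fpowersetE.
rewrite (bigD1_seq (domf m)) //=; last exact: fset_uniq.
rewrite big1_seq ?addn0; last first.
  move=> U /andP [nS SP]; rewrite eval_Diff eval_piece /mselect.
  case e: (feval _ _); rewrite ?if_same //.
  move: SP; rewrite fpowersetE => SV.
  have := (bnd_eq v SV mV).1 e; by move/eqP: nS => nS /esym.
rewrite eval_Diff eval_piece /mselect.
by rewrite (proj2 (@bnd_eq v V (domf m) m mV mV) erefl).
Qed.

Lemma fnd_catr (a b : mapping) x : (a + b).[? x] = if b.[? x] is Some v then Some v else a.[? x].
Proof. by rewrite fnd_cat fnd_dom; case: (b.[? x]). Qed.

Lemma fnd_restr (a : mapping) A x : a.[& A].[? x] = if x \in A then a.[? x] else None.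
Proof. exact: fnd_restrict. Qed.

Definition offD (D : {fset Vr}) (nu : mapping) := forall x, x \in D -> nu.[? x] = None.

Lemma domE (mu : mapping) D : domf mu = D -> forall x, (mu.[? x] != None) = (x \in D).
Proof. by move=> <- x; rewrite fnd_dom. Qed.

Lemma dom_eq_collapse (a b : mapping) : domf a = domf b -> compatible a b -> a = b.
Proof.
move=> e /compatP c; apply/fmapP => x; move: (domE e x); rewrite fnd_dom.
case ea: (a.[? x]) => [va|]; case eb: (b.[? x]) => [vb|] //= _.
by rewrite (c x va vb).
Qed.

Lemma collapse_r (m nu mu : mapping) : domf mu = domf m -> compatible m (nu + mu) -> mu = m.
Proof.
move=> e /compatP c; apply: dom_eq_collapse => //; apply/compatP => x v1 v2 e1 e2.
by apply/esym; apply: (c x v2 v1) => //; rewrite fnd_catr e1.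
Qed.

Lemma collapse_l (m a b : mapping) : domf a = domf m -> compatible a b -> compatible m (a + b) -> a = m.
Proof.
move=> e cab /compatP c; apply: dom_eq_collapse => //; apply/compatP => x v1 v2 e1 e2.
by apply/esym; apply: (c x v2 v1) => //; rewrite fnd_catc // e1.
Qed.

Lemma compat_catR (nu mu : mapping) : compatible mu (nu + mu).
Proof. by apply/compatP => x v1 v2 e1; rewrite fnd_catr e1 => -[]. Qed.

Lemma T_compat (mu1 mu2 nu1 nu2 : mapping) D : domf mu1 = D -> domf mu2 = D ->
  offD D nu1 -> offD D nu2 -> compatible (nu1 + mu1) (nu2 + mu2) -> mu1 = mu2 /\ compatible nu1 nu2.
Proof.
move=> d1 d2 o1 o2 /compatP c.
have e : mu1 = mu2.
  apply: dom_eq_collapse; first by rewrite d1 d2.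
  apply/compatP => x v1 v2 e1 e2; apply: (c x); by rewrite fnd_catr ?e1 ?e2.
split => //; subst mu2; apply/compatP => x v1 v2 e1 e2.
have xD : x \notin D by apply/negP => /o1; rewrite e1.
have : mu1.[? x] = None by move: (domE d1 x); rewrite (negPf xD); case: (mu1.[? x]).
move=> m0; apply: (c x); by rewrite fnd_catr m0 ?e1 ?e2.
Qed.

Lemma T_compat' (mu nu1 nu2 : mapping) : compatible nu1 nu2 -> compatible (nu1 + mu) (nu2 + mu).
Proof.
move=> /compatP c; apply/compatP => x v1 v2; rewrite !fnd_catr.
case: (mu.[? x]) => [a|]; first by move=> [<-] [<-].
exact: c.
Qed.

Lemma T_cat (mu nu1 nu2 : mapping) : (nu1 + mu) + (nu2 + mu) = (nu1 + nu2) + mu.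
Proof. apply/fmapP => x; rewrite !fnd_catr; by case: (mu.[? x]); case: (nu2.[? x]). Qed.

Lemma domf_sub_nu (mu nu : mapping) (P : pattern) : 0 < eval (psubst mu P) nu ->
  domf nu `<=` pvars P /\ offD (domf mu) nu.
Proof.
move=> /dom_eval /fsubsetP h; split.
  by apply/fsubsetP => x /h; rewrite pvars_subst => /andP[].
move=> x xD; apply/eqP; rewrite -[_ == _]negbK -fnd_dom; apply/negP => /h.
by rewrite pvars_subst xD andbF.
Qed.

Definition Spec (X Q P : pattern) := forall m, 0 < eval Q m <->
  exists mu nu, [/\ 0 < eval X mu, 0 < eval (psubst mu P) nu & m = nu + mu].

Lemma tinst_ext (a b : mapping) (t : tpattern I Lt Vr) :
  (forall x, x \in tpvars t -> a.[? x] = b.[? x]) -> tinst a t = tinst b t.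
Proof.
case: t => [[s p] o] h /=.
have hv : forall u : term, tvars u `<=` tpvars (s, p, o) -> Defs.tval a u = Defs.tval b u.
  by case=> [x|c] //= /fsubsetP sub; apply: h; apply: sub; rewrite in_fset1.
rewrite !hv //= ?fsubsetUr //; apply: fsubset_trans (fsubsetUl _ _); by rewrite ?fsubsetUr ?fsubsetUl.
Qed.

Lemma tpvars_subst (mu : mapping) s p o x :
  x \in tpvars (tsubst mu s, tsubst mu p, tsubst mu o) = (x \in tpvars (s, p, o)) && (x \notin domf mu).
Proof. by rewrite /= !in_fsetU !tvars_subst -!andb_orl. Qed.

Lemma spec_T (X : pattern) (t : tpattern I Lt Vr) : Spec X (PAnd X (PT t)) (PT t).
Proof.
case: t => [[s p] o] m; rewrite eval_And mjoin_pos; split.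
  move=> [m1 [m2 [p1 p2 c ->]]].
  move: p2; rewrite eval_T; case: pbP => // -[d2 [tr [ti Gt]]] _.
  exists m1, m2.[\ domf m1]; split => //.
    rewrite /= eval_T; case: pbP => // -[]; split.
      apply/fsetP => x; rewrite domf_rem in_fsetD tpvars_subst d2; by rewrite andbC.
    exists tr; split => //; rewrite tinst_subst -ti; apply: tinst_ext => x xt.
    rewrite fnd_catr fnd_rem; move/compatP: c => c.
    case e1: (m1.[? x]) => [v|]; last by rewrite fnd_dom e1.
    case e2: (m2.[? x]) => [w|]; first by rewrite (c x v w).
    by move: xt; rewrite -d2 fnd_dom e2.
  apply/fmapP => x; rewrite !fnd_catr fnd_rem fnd_dom; move/compatP: c => c.
  case e1: (m1.[? x]) => [v|] /=; last by case: (m2.[? x]).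
  case e2: (m2.[? x]) => [w|] //; by rewrite (c x v w).
move=> [mu [nu [p1 p2 ->]]].
move: p2; rewrite /= eval_T; case: pbP => // -[d2 [tr [ti Gt]]] _.
have tnm : forall x, x \in tpvars (s, p, o) -> x \notin domf mu -> x \in domf nu.
  by move=> x xt xm; rewrite d2 tpvars_subst xt xm.
have ntm : forall x, x \in domf nu -> x \in tpvars (s, p, o).
  by move=> x; rewrite d2 tpvars_subst => /andP[].
exists mu, (nu + mu).[& tpvars (s, p, o)]; split => //.
- rewrite eval_T; case: pbP => // -[]; split.
    apply/fsetP => x; rewrite domf_restrict in_fsetI domf_cat in_fsetU.
    case xt: (x \in tpvars _) => //=; case: (boolP (x \in domf mu)); rewrite ?orbT // => xm.
    by rewrite tnm.
  exists tr; split => //; rewrite -ti tinst_subst; apply: tinst_ext => x xt.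
  by rewrite fnd_restr xt.
- apply/compatP => x v1 v2 e1; rewrite fnd_restr fnd_catr e1; case: ifP => // _ [] //.
- apply/fmapP => x; rewrite !fnd_catr fnd_restr.
  case xt: (x \in tpvars _); rewrite ?fnd_catr /=.
    by case: (mu.[? x]) => //; case: (nu.[? x]).
  case: (mu.[? x]) => //; case e: (nu.[? x]) => [w|] //.
  have : x \in domf nu by rewrite fnd_dom e.
  by move/ntm; rewrite xt.
Qed.

Definition SpecF (X Q : pattern) (E : mapping -> mset) := forall m, 0 < eval Q m <->
  exists mu nu, [/\ 0 < eval X mu, 0 < E mu nu & m = nu + mu].

Definition goodE (D : {fset Vr}) (W : {fset Vr}) (E : mapping -> mset) :=
  forall mu nu, domf mu = D -> 0 < E mu nu -> domf nu `<=` W /\ offD D nu.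

Lemma pb_pos (P : Prop) n : 0 < (if pb P then n else 0) <-> P /\ 0 < n.
Proof. by case: pbP => h; split => // -[]. Qed.

Lemma SpecF_ext X Q E E' : SpecF X Q E -> (forall mu nu, E mu nu = E' mu nu) -> SpecF X Q E'.
Proof.
move=> h e m; rewrite h; split => -[mu [nu [a b c]]]; exists mu, nu; split => //;
 by rewrite ?e // -e.
Qed.

Lemma SpecF_dom X Q E D W : (forall mu, 0 < eval X mu -> domf mu = D) -> goodE D W E ->
  SpecF X Q E -> forall m, 0 < eval Q m -> domf m `<=` D `|` W.
Proof.
move=> hX hE h m /h [mu [nu [p1 p2 ->]]]; rewrite domf_cat (hX _ p1) fsetUC.
by apply: fsetUS; case: (hE mu nu (hX _ p1) p2).
Qed.

Section Cores.
Variables (X : pattern) (D : {fset Vr}).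
Hypothesis hX : forall mu, 0 < eval X mu -> domf mu = D.

Lemma sUnion QA QB EA EB : SpecF X QA EA -> SpecF X QB EB ->
  SpecF X (PUnion QA QB) (fun mu => munion_ms (EA mu) (EB mu)).
Proof.
move=> hA hB m; rewrite eval_Union munion_pos; split.
  case/orP => [/hA|/hB] [mu [nu [p1 p2 ->]]]; exists mu, nu; by rewrite munion_pos p2 ?orbT.
move=> [mu [nu [p1 p2 ->]]]; move: p2; rewrite munion_pos => /orP p2; apply/orP; case: p2 => p2; [left; apply/hA|right; apply/hB];
 by exists mu, nu.
Qed.

Lemma sFilter Q E C : SpecF X Q E ->
  SpecF X (PFilter Q C) (fun mu => mselect (fun nu => feval C (nu + mu)) (E mu)).
Proof.
move=> h m; rewrite eval_Filter mselect_pos; split.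
  move=> [f /h [mu [nu [p1 p2 e]]]]; exists mu, nu; split => //; apply/mselect_pos; by rewrite -e.
move=> [mu [nu [p1 /mselect_pos [f p2] ->]]]; split => //; apply/h; by exists mu, nu.
Qed.

Lemma sAnd QA QB EA EB WA WB : goodE D WA EA -> goodE D WB EB -> SpecF X QA EA -> SpecF X QB EB ->
  SpecF X (PAnd QA QB) (fun mu => mjoin (EA mu) (EB mu)).
Proof.
move=> gA gB hA hB m; rewrite eval_And mjoin_pos; split.
  move=> [m1 [m2 [/hA [mu1 [nu1 [x1 e1 ->]]] /hB [mu2 [nu2 [x2 e2 ->]]] c ->]]].
  have d1 := hX x1; have d2 := hX x2.
  have [ee c'] := T_compat d1 d2 (gA _ _ d1 e1).2 (gB _ _ d2 e2).2 c; subst mu2.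
  exists mu1, (nu1 + nu2); split => //; last by rewrite T_cat.
  by apply: (proj2 (mjoin_pos _ _ _)); exists nu1, nu2.
move=> [mu [nu [x /mjoin_pos [n1 [n2 [e1 e2 c ->]]] ->]]].
exists (n1 + mu), (n2 + mu); split; [apply/hA | apply/hB | exact: T_compat' | by rewrite T_cat].
  by exists mu, n1.
by exists mu, n2.
Qed.

Lemma sDiff QA QB EA EB WA WB : goodE D WA EA -> goodE D WB EB -> SpecF X QA EA -> SpecF X QB EB ->
  SpecF X (PDiff QA QB) (fun mu nu =>
    if pb (forall n2, 0 < EB mu n2 -> ~ compatible nu n2) then EA mu nu else 0).
Proof.
move=> gA gB hA hB m; rewrite eval_Diff pb_pos; split.
  move=> [h /hA [mu [nu [x e em]]]]; subst m; exists mu, nu; split => //; apply/pb_pos; split => //.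
  move=> n2 e2 c; apply: (h (n2 + mu) _ (T_compat' c)).
  by apply/hB; exists mu, n2.
move=> [mu [nu [x /pb_pos [h e] ->]]]; split; last by apply/hA; exists mu, nu.
move=> m2 /hB [mu2 [n2 [x2 e2 ->]]] c.
have d1 := hX x; have d2 := hX x2.
have [ee c'] := T_compat d1 d2 (gA _ _ d1 e).2 (gB _ _ d2 e2).2 c; subst mu2.
exact: (h n2 e2 c').
Qed.

Lemma sMinus v QA QB EA EB WA WB : goodE D WA EA -> goodE D WB EB -> SpecF X QA EA -> SpecF X QB EB ->
  SpecF X (punion v [seq PDiff (piece v (D `|` WA) U QA) (PFilter QB (anyb v (U `\` D))) | U <- fpowerset (D `|` WA)])
    (fun mu nu => if pb (forall n2, 0 < EB mu n2 -> ~ compatible nu n2 \/ domf nu `&` domf n2 = fset0)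
                  then EA mu nu else 0).
Proof.
move=> gA gB hA hB m; rewrite pieces_sum; last exact: SpecF_dom hX gA hA.
rewrite pb_pos; split.
  move=> [h /hA [mu [nu [x e em]]]]; subst m; exists mu, nu; split => //; apply/pb_pos; split => //.
  move=> n2 e2; case: (classic (compatible nu n2)) => c; [right | by left].
  apply/fsetP => y; rewrite in_fsetI in_fset0; apply/negP => /andP [y1 y2].
  apply: (h (n2 + mu)); last exact: T_compat' c.
  rewrite eval_Filter; apply/mselect_pos; split; last by apply/hB; exists mu, n2.
  apply/anyb_sem; exists y; last by rewrite domf_cat in_fsetU y2.
  rewrite in_fsetD domf_cat in_fsetU y1 andbT; apply/negP => yD.
  by move: y1; rewrite fnd_dom ((gA _ _ (hX x) e).2 _ yD).
move=> [mu [nu [x /pb_pos [h e] em]]]; subst m; split; last by apply/hA; exists mu, nu.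
move=> m2; rewrite eval_Filter => /mselect_pos [/anyb_sem [y y1 y2] /hB [mu2 [n2 [x2 e2 em2]]]] c.
subst m2.
have d1 := hX x; have d2 := hX x2.
have [ee c'] := T_compat d1 d2 (gA _ _ d1 e).2 (gB _ _ d2 e2).2 c; subst mu2.
case: (h n2 e2) => // ei.
have : y \in domf nu `&` domf n2.
  move: y1 y2; rewrite in_fsetI in_fsetD !domf_cat !in_fsetU d1 => /andP [yD]; rewrite (negPf yD) !orbF => -> ->.
  done.
by rewrite ei in_fset0.
Qed.

Lemma sOptD v QA QB EA EB WA WB C : wf_constr C -> goodE D WA EA -> goodE D WB EB ->
  SpecF X QA EA -> SpecF X QB EB ->
  SpecF X (punion v [seq PDiff (piece v (D `|` WA) U QA)
                  (PFilter (PAnd (piece v (D `|` WA) U QA) QB) (notfalse v C)) | U <- fpowerset (D `|` WA)])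
    (fun mu => mdiffF (fun nu => feval C (nu + mu)) (EA mu) (EB mu)).
Proof.
move=> wC gA gB hA hB m.
have hV := SpecF_dom hX gA hA.
rewrite pieces_sum // pb_pos; split.
  move=> [h /hA [mu [nu [x e em]]]]; subst m; exists mu, nu; split => //.
  rewrite /mdiffF; apply/pb_pos; split => //.
  move=> n2 e2; case: (classic (compatible nu n2)) => c; [right | by left]; split => //.
  case: (classic (feval C (munion nu n2 + mu) = TFalse)) => // nf; exfalso.
  apply: (h ((nu + n2) + mu)); last by apply: T_compat'; apply: compat_catl.
  rewrite eval_Filter; apply/mselect_pos; split; first by apply/notfalse_sem.
  rewrite eval_And; apply/mjoin_pos; exists (nu + mu), (n2 + mu); split; last by rewrite T_cat.
  - rewrite eval_piece; apply/mselect_pos; split; last by apply/hA; exists mu, nu.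
    have hm : 0 < eval QA (nu + mu) by apply/hA; exists mu, nu.
    exact: (bnd_eq v (hV _ hm) (hV _ hm)).2 erefl.
  - by apply/hB; exists mu, n2.
  - exact: T_compat'.
move=> [mu [nu [x /pb_pos [h e] em]]]; subst m; split; last by apply/hA; exists mu, nu.
have hm : 0 < eval QA (nu + mu) by apply/hA; exists mu, nu.
move=> m2; rewrite eval_Filter => /mselect_pos [/(notfalse_sem v _ wC) nf].
rewrite eval_And => /mjoin_pos [a [b [pa pb' cab em2]]] c; subst m2.
move: pa; rewrite eval_piece => /mselect_pos [ba pa].
have da : domf a = domf (nu + mu) by exact: (bnd_eq v (hV _ hm) (hV _ pa)).1 ba.
have ea := collapse_l da cab c; subst a.
move: pb' => /hB [mu2 [n2 [x2 e2 em2]]]; subst b.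
have d1 := hX x; have d2 := hX x2.
have [ee c'] := T_compat d1 d2 (gA _ _ d1 e).2 (gB _ _ d2 e2).2 cab; subst mu2.
case: (h n2 e2) => // -[_]; rewrite /munion -T_cat => /nf [].
Qed.

Lemma sNEx v QA EA WA (TT : pattern -> {fset Vr} -> pattern) (R : pattern) :
  goodE D WA EA -> SpecF X QA EA ->
  (forall X' U, (forall mu, 0 < eval X' mu -> domf mu = U) -> SpecF X' (TT X' U) (fun mu => eval (psubst mu R))) ->
  SpecF X (punion v [seq PDiff (piece v (D `|` WA) U QA) (TT (piece v (D `|` WA) U QA) U) | U <- fpowerset (D `|` WA)])
    (fun mu nu => if pb (forall n2, eval (psubst (nu + mu) R) n2 = 0) then EA mu nu else 0).
Proof.
move=> gA hA hT m.
have hV := SpecF_dom hX gA hA.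
rewrite pieces_sum // pb_pos.
have hX' : 0 < eval QA m -> forall mu, 0 < eval (piece v (D `|` WA) (domf m) QA) mu -> domf mu = domf m.
  move=> hm mu; rewrite eval_piece => /mselect_pos [b pa].
  exact: (bnd_eq v (hV _ hm) (hV _ pa)).1 b.
split.
  move=> [h hm]; have := hT _ _ (hX' hm) => hT'.
  move/hA: hm => [mu [nu [x e em]]]; subst m; exists mu, nu; split => //.
  apply/pb_pos; split => // n2; apply/eqP; rewrite -leqn0 leqNgt; apply/negP => pn.
  apply: (h (n2 + (nu + mu))); last exact: compat_catR.
  apply/hT'; exists (nu + mu), n2; split => //.
  rewrite eval_piece; apply/mselect_pos; split; last by apply/hA; exists mu, nu.
  have hm : 0 < eval QA (nu + mu) by apply/hA; exists mu, nu.
  exact: (bnd_eq v (hV _ hm) (hV _ hm)).2 erefl.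
move=> [mu [nu [x /pb_pos [h e] em]]]; subst m.
have hm : 0 < eval QA (nu + mu) by apply/hA; exists mu, nu.
split => //; move=> m2 /(hT _ _ (hX' hm)) [mu' [n2 [p1 p2 em2]]] c; subst m2.
have := collapse_r (hX' hm _ p1) c => emu; subst mu'.
by move: p2; rewrite h.
Qed.
End Cores.

Definition optT v V (Q1 Q3 : pattern) C : pattern :=
  PUnion (PFilter (PAnd Q1 Q3) C)
    (punion v [seq PDiff (piece v V U Q1) (PFilter (PAnd (piece v V U Q1) Q3) (notfalse v C)) | U <- fpowerset V]).

Fixpoint Tr (v : Vr) (X : pattern) (D : {fset Vr}) (P : pattern) {struct P} : pattern :=
  match P with
  | PT t => PAnd X (PT t)
  | PAnd P1 P2 => PAnd (Tr v X D P1) (Tr v X D P2)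
  | PUnion P1 P2 => PUnion (Tr v X D P1) (Tr v X D P2)
  | POpt P1 P2 =>
      match P2 with
      | PFilter P3 C => optT v (D `|` pvars P1) (Tr v X D P1) (Tr v X D P3) C
      | _ => optT v (D `|` pvars P1) (Tr v X D P1) (Tr v X D P2) (ctrue v)
      end
  | PMinus P1 P2 => punion v [seq PDiff (piece v (D `|` pvars P1) U (Tr v X D P1))
                        (PFilter (Tr v X D P2) (anyb v (U `\` D))) | U <- fpowerset (D `|` pvars P1)]
  | PNotExists P1 P2 => punion v [seq PDiff (piece v (D `|` pvars P1) U (Tr v X D P1))
                        (Tr v (piece v (D `|` pvars P1) U (Tr v X D P1)) U P2) | U <- fpowerset (D `|` pvars P1)]
  | PDiff P1 P2 => PDiff (Tr v X D P1) (Tr v X D P2)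
  | PFilter P1 C => PFilter (Tr v X D P1) C
  end.

Definition isFilter (P : pattern) := if P is PFilter _ _ then true else false.

Lemma eval_Opt_nf (P1 P2 : pattern) : ~~ isFilter P2 -> eval (POpt P1 P2) = mleftjoin (@ftrue I Lt Vr) (eval P1) (eval P2).
Proof. by rewrite eval_Opt; case: P2. Qed.

Lemma isFilter_subst (mu : mapping) P : isFilter (psubst mu P) = isFilter P.
Proof. by case: P => // -[[]]. Qed.

Lemma goodE_subst D (P : pattern) : goodE D (pvars P) (fun mu => eval (psubst mu P)).
Proof. by move=> mu nu <- /domf_sub_nu. Qed.

Lemma ftrueE v (mu : mapping) : (fun nu => feval (ctrue v) (nu + mu)) = @ftrue I Lt Vr.
Proof. by apply: functional_extensionality => nu; rewrite feval_ctrue. Qed.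

Lemma fevalE (mu : mapping) C : (fun nu => feval C (nu + mu)) = feval (csubst mu C).
Proof. by apply: functional_extensionality => nu; rewrite feval_csubst. Qed.

Lemma Tspec v (P : pattern) : wf_pat P -> forall X D, (forall mu, 0 < eval X mu -> domf mu = D) ->
  SpecF X (Tr v X D P) (fun mu => eval (psubst mu P)).
Proof.
elim/size_ind: P => P IH wP X D hX.
case: P IH wP => [t|P1 P2|P1 P2|P1 P2|P1 P2|P1 P2|P1 P2|P1 C] IH wP.
- exact: spec_T.
- move/andP: wP => [w1 w2].
  have h1 : SpecF X (Tr v X D P1) (fun mu => eval (psubst mu P1)) by apply: IH => //=; lia.
  have h2 : SpecF X (Tr v X D P2) (fun mu => eval (psubst mu P2)) by apply: IH => //=; lia.
  apply: (SpecF_ext (sAnd hX (@goodE_subst D P1) (@goodE_subst D P2) h1 h2)).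
  by move=> mu nu; rewrite /= eval_And.
- move/andP: wP => [w1 w2].
  have h1 : SpecF X (Tr v X D P1) (fun mu => eval (psubst mu P1)) by apply: IH => //=; lia.
  have h2 : SpecF X (Tr v X D P2) (fun mu => eval (psubst mu P2)) by apply: IH => //=; lia.
  apply: (SpecF_ext (sUnion h1 h2)).
  by move=> mu nu; rewrite /= eval_Union.
- move/andP: wP => [w1 w2].
  have h1 : SpecF X (Tr v X D P1) (fun mu => eval (psubst mu P1)) by apply: IH => //=; lia.
  case hf: (isFilter P2).
  + case: P2 hf IH w2 => // P3 C _ IH /andP [w3 wC].
    have h3 : SpecF X (Tr v X D P3) (fun mu => eval (psubst mu P3)) by apply: IH => //=; lia.
    apply: (SpecF_ext (sUnion (sFilter C (sAnd hX (@goodE_subst D P1) (@goodE_subst D P3) h1 h3))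
                               (sOptD hX v wC (@goodE_subst D P1) (@goodE_subst D P3) h1 h3))).
    by move=> mu nu; rewrite [psubst _ _]/= eval_Opt /mleftjoin fevalE.
  + have h2 : SpecF X (Tr v X D P2) (fun mu => eval (psubst mu P2)) by apply: IH => //=; lia.
    have -> : Tr v X D (POpt P1 P2) = optT v (D `|` pvars P1) (Tr v X D P1) (Tr v X D P2) (ctrue v)
      by case: P2 hf {IH w2 h2}.
    have wt : wf_constr (ctrue v) by [].
    apply: (SpecF_ext (sUnion (sFilter (ctrue v) (sAnd hX (@goodE_subst D P1) (@goodE_subst D P2) h1 h2))
                               (sOptD hX v wt (@goodE_subst D P1) (@goodE_subst D P2) h1 h2))).
    move=> mu nu; rewrite [psubst _ (POpt _ _)]/= eval_Opt_nf ?isFilter_subst ?hf //.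
    by rewrite /mleftjoin ftrueE.
- move/andP: wP => [w1 w2].
  have h1 : SpecF X (Tr v X D P1) (fun mu => eval (psubst mu P1)) by apply: IH => //=; lia.
  have h2 : SpecF X (Tr v X D P2) (fun mu => eval (psubst mu P2)) by apply: IH => //=; lia.
  apply: (SpecF_ext (sMinus hX v (@goodE_subst D P1) (@goodE_subst D P2) h1 h2)).
  by move=> mu nu; rewrite /= eval_Minus.
- move/andP: wP => [w1 w2].
  have h1 : SpecF X (Tr v X D P1) (fun mu => eval (psubst mu P1)) by apply: IH => //=; lia.
  have hT : forall X' U, (forall mu, 0 < eval X' mu -> domf mu = U) ->
      SpecF X' (Tr v X' U P2) (fun mu => eval (psubst mu P2)).
    by move=> X' U hX'; apply: IH => //=; lia.
  apply: (SpecF_ext (sNEx hX v (@goodE_subst D P1) h1 hT)).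
  by move=> mu nu; rewrite /= eval_NEx psubst_comp.
- move/andP: wP => [w1 w2].
  have h1 : SpecF X (Tr v X D P1) (fun mu => eval (psubst mu P1)) by apply: IH => //=; lia.
  have h2 : SpecF X (Tr v X D P2) (fun mu => eval (psubst mu P2)) by apply: IH => //=; lia.
  apply: (SpecF_ext (sDiff hX (@goodE_subst D P1) (@goodE_subst D P2) h1 h2)).
  by move=> mu nu; rewrite /= eval_Diff.
- move/andP: wP => [w1 wC].
  have h1 : SpecF X (Tr v X D P1) (fun mu => eval (psubst mu P1)) by apply: IH => //=; lia.
  apply: (SpecF_ext (sFilter C h1)).
  by move=> mu nu; rewrite /= eval_Filter fevalE.
Qed.

Lemma ifpb_congr (P P' : Prop) n : (0 < n -> (P <-> P')) ->
  (if pb P then n else 0) = (if pb P' then n else 0).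
Proof.
case: (posnP n) => [->|h]; first by rewrite !if_same.
by move/(_ isT) => e; case: pbP => p; case: pbP => p' //; [case: p'; apply/e | case: p; apply/e].
Qed.

Lemma eOptD v V (Q1 Q3 : pattern) C : wf_constr C ->
  (forall m, 0 < eval Q1 m -> domf m `<=` V) -> forall m,
  eval (punion v [seq PDiff (piece v V U Q1) (PFilter (PAnd (piece v V U Q1) Q3) (notfalse v C)) | U <- fpowerset V]) m
  = mdiffF (feval C) (eval Q1) (eval Q3) m.
Proof.
move=> wC hV m; rewrite pieces_sum // /mdiffF; apply: ifpb_congr => hm; split.
  move=> h n2 e2; case: (classic (compatible m n2)) => c; [right | by left]; split => //.
  case: (classic (feval C (munion m n2) = TFalse)) => // nf; exfalso.
  apply: (h (m + n2)); last exact: compat_catl.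
  rewrite eval_Filter; apply/mselect_pos; split; first by apply/notfalse_sem.
  rewrite eval_And; apply/mjoin_pos; exists m, n2; split => //.
  rewrite eval_piece; apply/mselect_pos; split => //.
  exact: (bnd_eq v (hV _ hm) (hV _ hm)).2 erefl.
move=> h m2; rewrite eval_Filter => /mselect_pos [/(notfalse_sem v _ wC) nf].
rewrite eval_And => /mjoin_pos [a [b [pa pb' cab em2]]] c; subst m2.
move: pa; rewrite eval_piece => /mselect_pos [ba pa].
have da : domf a = domf m by exact: (bnd_eq v (hV _ hm) (hV _ pa)).1 ba.
have ea := collapse_l da cab c; subst a.
by case: (h b pb') => // -[_ /nf].
Qed.

Lemma eMinus v V (Q1 Q2 : pattern) : (forall m, 0 < eval Q1 m -> domf m `<=` V) -> forall m,
  eval (punion v [seq PDiff (piece v V U Q1) (PFilter Q2 (anyb v U)) | U <- fpowerset V]) m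
  = eval (PMinus Q1 Q2) m.
Proof.
move=> hV m; rewrite pieces_sum // eval_Minus; apply: ifpb_congr => hm; split.
  move=> h n2 e2; case: (classic (compatible m n2)) => c; [right | by left].
  apply/fsetP => y; rewrite in_fsetI in_fset0; apply/negP => /andP [y1 y2].
  apply: (h n2) => //; rewrite eval_Filter; apply/mselect_pos; split => //.
  by apply/anyb_sem; exists y.
move=> h m2; rewrite eval_Filter => /mselect_pos [/anyb_sem [y y1 y2] p2] c.
case: (h m2 p2) => // ei.
have : y \in domf m `&` domf m2 by rewrite in_fsetI y1 y2.
by rewrite ei in_fset0.
Qed.

Lemma eNEx v V (Q1 : pattern) (P2 : pattern) : wf_pat P2 ->
  (forall m, 0 < eval Q1 m -> domf m `<=` V) -> forall m,
  eval (punion v [seq PDiff (piece v V U Q1) (Tr v (piece v V U Q1) U P2) | U <- fpowerset V]) m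
  = eval (PNotExists Q1 P2) m.
Proof.
move=> w2 hV m; rewrite pieces_sum // eval_NEx; apply: ifpb_congr => hm.
have hX' : forall mu, 0 < eval (piece v V (domf m) Q1) mu -> domf mu = domf m.
  move=> mu; rewrite eval_piece => /mselect_pos [b pa].
  exact: (bnd_eq v (hV _ hm) (hV _ pa)).1 b.
have hT := Tspec v w2 hX'.
split.
  move=> h n2; apply/eqP; rewrite -leqn0 leqNgt; apply/negP => pn.
  apply: (h (n2 + m)); last exact: compat_catR.
  apply/hT; exists m, n2; split => //.
  rewrite eval_piece; apply/mselect_pos; split => //.
  exact: (bnd_eq v (hV _ hm) (hV _ hm)).2 erefl.
move=> h m2 /hT [mu' [n2 [p1 p2 em2]]] c; subst m2.
have := collapse_r (hX' _ p1) c => emu; subst mu'.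
by move: p2; rewrite h.
Qed.

Definition ok (Q : pattern) := wf_pat Q && in_DIFF Q.

Lemma bndl_wf v l S : wf_constr (bndl v l S).
Proof. by elim: l => [|x l IH] //=; rewrite IH andbT; case: ifP. Qed.
Lemma anyl_wf v l : wf_constr (anyl v l).
Proof. by elim: l => [|x l IH] //=. Qed.

Lemma punion_ok v ps : all ok ps -> ok (punion v ps).
Proof. by elim: ps => [|p ps IH] //= /andP [/andP [a b] /IH /andP [c d]]; rewrite /ok /= a b c d. Qed.

Lemma piece_ok v V U Q : ok Q -> ok (piece v V U Q).
Proof. by move=> /andP [a b]; rewrite /ok /= a b bndl_wf. Qed.

Lemma optT_ok v V Q1 Q3 C : ok Q1 -> ok Q3 -> wf_constr C -> ok (optT v V Q1 Q3 C).
Proof.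
move=> o1 o3 wC; move: (o1) (o3) => /andP [a b] /andP [c d].
rewrite /ok /= a b c d wC /=; apply: punion_ok; rewrite all_map; apply/allP => U _ /=.
by rewrite /ok /= a b c d ?bndl_wf; move: (notfalse_wf v wC); rewrite /notfalse /= => ->.
Qed.

Lemma Tr_ok v (P : pattern) : wf_pat P -> forall X D, ok X -> ok (Tr v X D P).
Proof.
elim/size_ind: P => P IH wP X D oX.
case: P IH wP => [t|P1 P2|P1 P2|P1 P2|P1 P2|P1 P2|P1 P2|P1 C] IH wP.
- move: oX wP => /andP [a b]; case: t {IH} => [[s p] o] wP; rewrite /ok /= a b. move: wP; rewrite /=. by move=> ->.
- move/andP: wP => [w1 w2].
  have := IH P1 _ w1 X D oX; have := IH P2 _ w2 X D oX; rewrite /= => /(_ ltac:(lia)) /andP [a b] /(_ ltac:(lia)) /andP [c d].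
  by rewrite /ok /= a b c d.
- move/andP: wP => [w1 w2].
  have := IH P1 _ w1 X D oX; have := IH P2 _ w2 X D oX; rewrite /= => /(_ ltac:(lia)) /andP [a b] /(_ ltac:(lia)) /andP [c d].
  by rewrite /ok /= a b c d.
- move/andP: wP => [w1 w2].
  have o1 : ok (Tr v X D P1) by apply: IH => //=; lia.
  case hf: (isFilter P2).
  + case: P2 hf IH w2 => // P3 C _ IH /andP [w3 wC].
    have o3 : ok (Tr v X D P3) by apply: IH => //=; lia.
    exact: optT_ok.
  + have o2 : ok (Tr v X D P2) by apply: IH => //=; lia.
    have -> : Tr v X D (POpt P1 P2) = optT v (D `|` pvars P1) (Tr v X D P1) (Tr v X D P2) (ctrue v)
      by case: P2 hf {IH w2 o2}.
    exact: optT_ok.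
- move/andP: wP => [w1 w2].
  have o1 : ok (Tr v X D P1) by apply: IH => //=; lia.
  have o2 : ok (Tr v X D P2) by apply: IH => //=; lia.
  apply: punion_ok; rewrite all_map; apply/allP => U _ /=.
  move: o1 o2 => /andP [e f] /andP [c d].
  by rewrite /ok /= e f c d anyl_wf bndl_wf.
- move/andP: wP => [w1 w2].
  have o1 : ok (Tr v X D P1) by apply: IH => //=; lia.
  apply: punion_ok; rewrite all_map; apply/allP => U _ /=.
  have o2 : ok (Tr v (piece v (D `|` pvars P1) U (Tr v X D P1)) U P2).
    by apply: IH => //=; [lia | exact: piece_ok].
  move: o1 o2 => /andP [e f] /andP [c d].
  by rewrite /ok /= e f c d bndl_wf.
- move/andP: wP => [w1 w2].
  have := IH P1 _ w1 X D oX; have := IH P2 _ w2 X D oX; rewrite /= => /(_ ltac:(lia)) /andP [a b] /(_ ltac:(lia)) /andP [c d].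
  by rewrite /ok /= a b c d.
- move/andP: wP => [w1 wC].
  have := IH P1 _ w1 X D oX; rewrite /= => /(_ ltac:(lia)) /andP [a b].
  by rewrite /ok /= a b wC.
Qed.

Fixpoint tr (v : Vr) (P : pattern) {struct P} : pattern :=
  match P with
  | PT t => PT t
  | PAnd P1 P2 => PAnd (tr v P1) (tr v P2)
  | PUnion P1 P2 => PUnion (tr v P1) (tr v P2)
  | POpt P1 P2 =>
      match P2 with
      | PFilter P3 C => optT v (pvars P1) (tr v P1) (tr v P3) C
      | _ => optT v (pvars P1) (tr v P1) (tr v P2) (ctrue v)
      end
  | PMinus P1 P2 => punion v [seq PDiff (piece v (pvars P1) U (tr v P1))
                        (PFilter (tr v P2) (anyb v U)) | U <- fpowerset (pvars P1)]
  | PNotExists P1 P2 => punion v [seq PDiff (piece v (pvars P1) U (tr v P1))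
                        (Tr v (piece v (pvars P1) U (tr v P1)) U P2) | U <- fpowerset (pvars P1)]
  | PDiff P1 P2 => PDiff (tr v P1) (tr v P2)
  | PFilter P1 C => PFilter (tr v P1) C
  end.

Lemma eOpt v V (Q1 Q3 : pattern) C : wf_constr C -> (forall m, 0 < eval Q1 m -> domf m `<=` V) ->
  eval (optT v V Q1 Q3 C) = mleftjoin (feval C) (eval Q1) (eval Q3).
Proof.
move=> wC hV; apply: functional_extensionality => m.
by rewrite /mleftjoin eval_Union /munion_ms eval_Filter eval_And eOptD.
Qed.

Lemma tr_ok v (P : pattern) : wf_pat P -> ok (tr v P).
Proof.
elim/size_ind: P => P IH wP.
case: P IH wP => [t|P1 P2|P1 P2|P1 P2|P1 P2|P1 P2|P1 P2|P1 C] IH wP.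
- by rewrite /ok /= andbT.
- move/andP: wP => [w1 w2].
  have := IH P1 _ w1; have := IH P2 _ w2; rewrite /= => /(_ ltac:(lia)) /andP [a b] /(_ ltac:(lia)) /andP [c d].
  by rewrite /ok /= a b c d.
- move/andP: wP => [w1 w2].
  have := IH P1 _ w1; have := IH P2 _ w2; rewrite /= => /(_ ltac:(lia)) /andP [a b] /(_ ltac:(lia)) /andP [c d].
  by rewrite /ok /= a b c d.
- move/andP: wP => [w1 w2].
  have o1 : ok (tr v P1) by apply: IH => //=; lia.
  case hf: (isFilter P2).
  + case: P2 hf IH w2 => // P3 C _ IH /andP [w3 wC].
    have o3 : ok (tr v P3) by apply: IH => //=; lia.
    exact: optT_ok.
  + have o2 : ok (tr v P2) by apply: IH => //=; lia.
    have -> : tr v (POpt P1 P2) = optT v (pvars P1) (tr v P1) (tr v P2) (ctrue v)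
      by case: P2 hf {IH w2 o2}.
    exact: optT_ok.
- move/andP: wP => [w1 w2].
  have o1 : ok (tr v P1) by apply: IH => //=; lia.
  have o2 : ok (tr v P2) by apply: IH => //=; lia.
  apply: punion_ok; rewrite all_map; apply/allP => U _ /=.
  move: o1 o2 => /andP [e f] /andP [c d].
  by rewrite /ok /= e f c d anyl_wf bndl_wf.
- move/andP: wP => [w1 w2].
  have o1 : ok (tr v P1) by apply: IH => //=; lia.
  apply: punion_ok; rewrite all_map; apply/allP => U _ /=.
  have o2 : ok (Tr v (piece v (pvars P1) U (tr v P1)) U P2).
    by apply: Tr_ok => //; exact: piece_ok.
  move: o1 o2 => /andP [e f] /andP [c d].
  by rewrite /ok /= e f c d bndl_wf.
- move/andP: wP => [w1 w2].
  have := IH P1 _ w1; have := IH P2 _ w2; rewrite /= => /(_ ltac:(lia)) /andP [a b] /(_ ltac:(lia)) /andP [c d].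
  by rewrite /ok /= a b c d.
- move/andP: wP => [w1 wC].
  have := IH P1 _ w1; rewrite /= => /(_ ltac:(lia)) /andP [a b].
  by rewrite /ok /= a b wC.
Qed.

Lemma tr_eval v (P : pattern) : wf_pat P -> eval (tr v P) = eval P.
Proof.
elim/size_ind: P => P IH wP.
case: P IH wP => [t|P1 P2|P1 P2|P1 P2|P1 P2|P1 P2|P1 P2|P1 C] IH wP.
- by [].
- move/andP: wP => [w1 w2].
  by rewrite [tr _ _]/= !eval_And (IH P1) ?(IH P2) //=; lia.
- move/andP: wP => [w1 w2].
  by rewrite [tr _ _]/= !eval_Union (IH P1) ?(IH P2) //=; lia.
- move/andP: wP => [w1 w2].
  have e1 : eval (tr v P1) = eval P1 by apply: IH => //=; lia.
  have hV : forall m, 0 < eval (tr v P1) m -> domf m `<=` pvars P1 by rewrite e1; exact: dom_eval.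
  case hf: (isFilter P2).
  + case: P2 hf IH w2 => // P3 C _ IH /andP [w3 wC].
    have e3 : eval (tr v P3) = eval P3 by apply: IH => //=; lia.
    by rewrite [tr _ _]/= eOpt // e1 e3 eval_Opt.
  + have e2 : eval (tr v P2) = eval P2 by apply: IH => //=; lia.
    have -> : tr v (POpt P1 P2) = optT v (pvars P1) (tr v P1) (tr v P2) (ctrue v)
      by case: P2 hf {IH w2 e2}.
    rewrite eOpt // e1 e2 eval_Opt_nf ?hf //.
    have -> : feval (ctrue v) = @ftrue I Lt Vr by apply: functional_extensionality => m; rewrite feval_ctrue.
    by [].
- move/andP: wP => [w1 w2].
  have e1 : eval (tr v P1) = eval P1 by apply: IH => //=; lia.
  have e2 : eval (tr v P2) = eval P2 by apply: IH => //=; lia.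
  have hV : forall m, 0 < eval (tr v P1) m -> domf m `<=` pvars P1 by rewrite e1; exact: dom_eval.
  apply: functional_extensionality => m; rewrite [tr _ _]/= eMinus //.
  by rewrite !eval_Minus e1 e2.
- move/andP: wP => [w1 w2].
  have e1 : eval (tr v P1) = eval P1 by apply: IH => //=; lia.
  have hV : forall m, 0 < eval (tr v P1) m -> domf m `<=` pvars P1 by rewrite e1; exact: dom_eval.
  apply: functional_extensionality => m; rewrite [tr _ _]/= eNEx //.
  by rewrite !eval_NEx e1.
- move/andP: wP => [w1 w2].
  by rewrite [tr _ _]/= !eval_Diff (IH P1) ?(IH P2) //=; lia.
- move/andP: wP => [w1 wC].
  by rewrite [tr _ _]/= !eval_Filter (IH P1) //=; lia.
Qed.
End S.

Theorem theorem2 (I Lt Vr : choiceType)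
  (infI : infinite_type I) (infL : infinite_type Lt) (infV : infinite_type Vr)
  (P : pattern I Lt Vr) :
  wf_pat P -> in_EXS P ->
  exists Q : pattern I Lt Vr,
    [/\ wf_pat Q, in_DIFF Q &
        forall (G : graph I Lt) (mu : mapping I Lt Vr), eval G Q mu = eval G P mu].
Proof.
move=> wP _; have [v _] := infV [::].
have /andP [a b] := tr_ok v wP.
exists (tr v P); split => // G mu.
by rewrite (tr_eval G v wP).
Qed.
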